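(* Let $D$ be a weak $\gamma$-LQG metric and $h$ a whole-plane GFF. For $q\in\mathbb Q^2$ let $P_q$ be the a.s. unique $D_h$-geodesic from $0$ to $q$. The following holds almost surely: if $q\in\mathbb Q^2$, $P'$ is any $D_h$-geodesic started from $0$, and $u\in P_q\cap P'$, then there is a time $s\ge0$ such that $P_q(s)=P'(s)=u$ and $P_q(t)=P'(t)$ for every $t\in[0,s]$.
   Context: A weak $\gamma$-LQG metric ($\gamma\in(0,2)$, with a constant $\xi>0$) is a measurable map $h\mapsto D_h$ from distributions on $\mathbb C$ to metrics on $\mathbb C$ inducing the Euclidean topology satisfying, for $h$ a whole-plane GFF plus a continuous function: length space property; locality (the internal metric of $D_h$ on a deterministic open $U$ is a.s. determined by $h|_U$); Weyl scaling $D_{h+f}=e^{\xi f}\cdot D_h$ for continuous $f$; translation invariance; and tightness across scales. A $D_h$-geodesic is a path of minimal $D_h$-length between its endpoints, parametrized by $D_h$-length (so a geodesic from $0$ hits a point $u$ at time $D_h(0,u)$). It is known (and may be used) that a.s. for every $q\in\mathbb Q^2$ there is exactly one $D_h$-geodesic from $0$ to $q$. *)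

(* Defs.v *)
From HB Require Import structures.
From mathcomp Require Import all_boot all_order all_algebra.
From mathcomp Require Import all_classical all_reals all_analysis.
Set Implicit Arguments. Unset Strict Implicit. Unset Printing Implicit Defensive.
Import Order.TTheory GRing.Theory Num.Theory.
Local Open Scope classical_set_scope.
Local Open Scope ring_scope.

(* The plane C is modelled as R * R. *)
Definition pt (R : realType) := (R * R)%type.

(* Euclidean-type distance (max norm; same topology as the Euclidean one). *)
Definition edist (R : realType) (x y : pt R) : R :=
  Num.max `|x.1 - y.1| `|x.2 - y.2|.

Definition origin (R : realType) : pt R := (0, 0).

Definition qpt (R : realType) (q : rat * rat) : pt R := (ratr q.1, ratr q.2).

Definition is_metric (R : realType) (d : pt R -> pt R -> R) : Prop :=
  (forall x y, 0 <= d x y) /\ (forall x y, d x y = 0 <-> x = y) /\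
  (forall x y, d x y = d y x) /\ (forall x y z, d x z <= d x y + d y z).

Definition induces_euclidean_topology (R : realType) (d : pt R -> pt R -> R) : Prop :=
  forall x : pt R,
    (forall e, 0 < e -> exists2 r, 0 < r & forall y, edist x y < r -> d x y < e) /\
    (forall e, 0 < e -> exists2 r, 0 < r & forall y, d x y < r -> edist x y < e).

(* P : R -> pt R is continuous on [a,b] (w.r.t. the Euclidean topology,
   equivalently the d-topology when d induces it). *)
Definition path_continuous_on (R : realType) (P : R -> pt R) (a b : R) : Prop :=
  forall t, a <= t <= b -> forall e, 0 < e ->
    exists2 r, 0 < r & forall s, a <= s <= b -> `|s - t| < r -> edist (P t) (P s) < e.

Definition path_length (R : realType) (d : pt R -> pt R -> R) (P : R -> pt R) (a b : R)
  : \bar R :=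
  ereal_sup [set l : \bar R | exists (n : nat) (t : nat -> R),
              [/\ t 0%N = a, t n = b, (forall i, (i < n)%N -> t i <= t i.+1) &
                  l = ((\sum_(i < n) d (P (t i)) (P (t i.+1)))%:E)%E]].

Definition path_from_to (R : realType) (P : R -> pt R) (T : R) (x y : pt R) : Prop :=
  0 <= T /\ P 0 = x /\ P T = y /\ path_continuous_on P 0 T.

Definition is_length_space (R : realType) (d : pt R -> pt R -> R) : Prop :=
  forall x y : pt R,
    (d x y)%:E = ereal_inf [set l : \bar R | exists (P : R -> pt R) (T : R),
                              path_from_to P T x y /\ l = path_length d P 0 T].

Definition is_geodesic (R : realType) (d : pt R -> pt R -> R) (P : R -> pt R) (T : R)
  (x y : pt R) : Prop :=
  path_from_to P T x y /\
  (forall (Q : R -> pt R) (S : R), path_from_to Q S x y ->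
      (path_length d P 0 T <= path_length d Q 0 S)%E) /\
  (forall t, 0 <= t <= T -> path_length d P 0 t = t%:E).

Definition is_geodesic_from0 (R : realType) (d : pt R -> pt R -> R) (P : R -> pt R) (T : R)
  : Prop := exists y, is_geodesic d P T (origin R) y.

(* exactly one geodesic from 0 to y (geodesics identified when they agree on
   their common parameter interval [0,T]) *)
Definition unique_geodesic_from0 (R : realType) (d : pt R -> pt R -> R) (y : pt R) : Prop :=
  (exists P T, is_geodesic d P T (origin R) y) /\
  forall P T P' T', is_geodesic d P T (origin R) y -> is_geodesic d P' T' (origin R) y ->
    T = T' /\ forall t, 0 <= t <= T -> P t = P' t.

(* Main.v *)
Require Import Defs.
From HB Require Import structures.
From mathcomp Require Import all_boot all_order all_algebra.
From mathcomp Require Import all_classical all_reals all_analysis.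
From mathcomp Require Import lra.
Import Order.TTheory GRing.Theory Num.Theory.
Local Open Scope classical_set_scope.
Local Open Scope ring_scope.

Section Geo.
Variables (R : realType) (d : pt R -> pt R -> R).
Hypothesis Hm : is_metric d.

Lemma part_le (P : R -> pt R) (a b : R) (n : nat) (t : nat -> R) :
  t 0%N = a -> t n = b -> (forall i, (i < n)%N -> t i <= t i.+1) ->
  ((\sum_(i < n) d (P (t i)) (P (t i.+1)))%:E <= path_length d P a b)%E.
Proof. move=> h0 hn hm; apply: ereal_sup_ubound; exists n, t; split => //. Qed.

Lemma part2 (P : R -> pt R) a b : a <= b -> ((d (P a) (P b))%:E <= path_length d P a b)%E.
Proof.
move=> ab.
have := @part_le P a b 1 (fun i => if i == 0%N then a else b) erefl erefl.
rewrite big_ord1 /=; apply => i; rewrite ltnS leqn0 => /eqP ->; by [].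
Qed.

Lemma part3 (P : R -> pt R) a m b : a <= m -> m <= b ->
  ((d (P a) (P m) + d (P m) (P b))%:E <= path_length d P a b)%E.
Proof.
move=> am mb.
have := @part_le P a b 2 (fun i => match i with 0%N => a | 1%N => m | _ => b end) erefl erefl.
rewrite big_ord_recr big_ord1 /=; apply; case=> [|[|]] //.
Qed.

Lemma part_ub (P : R -> pt R) a b (M : R) :
  (forall n (t : nat -> R), t 0%N = a -> t n = b -> (forall i, (i < n)%N -> t i <= t i.+1) ->
    \sum_(i < n) d (P (t i)) (P (t i.+1)) <= M) ->
  (path_length d P a b <= M%:E)%E.
Proof.
move=> H; apply: ge_ereal_sup => l [n [t [h0 hn hm ->]]]; rewrite lee_fin; exact: H.
Qed.

Lemma part_ext (P : R -> pt R) a x T n (t : nat -> R) :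
  t 0%N = a -> t n = x -> (forall i, (i < n)%N -> t i <= t i.+1) -> x <= T ->
  ((\sum_(i < n) d (P (t i)) (P (t i.+1)) + d (P x) (P T))%:E <= path_length d P a T)%E.
Proof.
move=> h0 hn hm xT.
pose t' i := if (i <= n)%N then t i else T.
have := @part_le P a T n.+1 t'.
rewrite /t' leq0n h0 ltnn => /(_ erefl erefl).
rewrite big_ord_recr /= leqnn ltnn hn.
have -> : \sum_(i < n) d (P (if (i <= n)%N then t i else T))
                          (P (if (i < n)%N then t i.+1 else T)) =
          \sum_(i < n) d (P (t i)) (P (t i.+1)).
  by apply: eq_bigr => i _; rewrite ltn_ord ltnW.
apply => i; rewrite ltnS => ilen.
rewrite ilen; case: (ltnP i n) => [iln|].
  by apply: hm.
move=> nle; have eq_in : i = n by apply/eqP; rewrite eqn_leq ilen.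
by rewrite eq_in hn.
Qed.

Lemma geo_facts (P : R -> pt R) T x y :
  is_length_space d -> is_geodesic d P T x y ->
  (forall t, 0 <= t <= T -> d x (P t) = t) /\
  (forall s t, 0 <= s -> s <= t -> t <= T -> d (P s) (P t) <= t - s).
Proof.
move: Hm => [d0 [dE [dS dT]]] Hl [[T0 [P0 [PT Pc]]] [Hmin Hpar]].
have HT : T <= d x y.
  have := Hl x y; move=> /(congr1 (fun z => (T%:E <= z)%E)).
  rewrite lee_fin => ->; apply: le_ereal_inf_tmp => l [Q [S [HQ ->]]].
  rewrite -(Hpar T); first exact: Hmin.
  by rewrite T0 lexx.
have Hup : forall t, 0 <= t <= T -> t + d (P t) y <= T.
  move=> t /andP[t0 tT].
  have : (path_length d P 0 t <= (T - d (P t) y)%:E)%E.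
    apply: part_ub => n tt h0 hn hm.
    have := part_ext P _ _ _ _ _ h0 hn hm tT; rewrite PT Hpar ?T0 ?lexx // lee_fin.
    by rewrite lerBrDr.
  by rewrite Hpar ?t0 ?tT // lee_fin lerBrDr.
have Hlo : forall t, 0 <= t <= T -> d x (P t) <= t.
  move=> t /andP[t0 tT].
  by have := part2 P _ _ t0; rewrite Hpar ?t0 ?tT // lee_fin P0.
have Heq : forall t, 0 <= t <= T -> d x (P t) = t.
  move=> t ht; apply/eqP; rewrite eq_le Hlo //=.
  have := Hup t ht; have := dT x (P t) y; move: HT; lra.
split => // s t s0 st tT.
have t0 : 0 <= t by apply: le_trans st.
have := part3 P _ _ _ s0 st; rewrite Hpar ?t0 ?tT // lee_fin P0 Heq ?s0 ?(le_trans st tT) //.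
lra.
Qed.

End Geo.

Lemma mono_le (R : realType) (t : nat -> R) n :
  (forall i, (i < n)%N -> t i <= t i.+1) -> forall i j, (i <= j)%N -> (j <= n)%N -> t i <= t j.
Proof.
move=> hm i; elim=> [|j IH] ij jn.
  by move: ij; rewrite leqn0 => /eqP ->.
case: (ltngtP i j.+1) ij => // [ij|->] _; last by [].
apply: le_trans (IH ij (ltnW jn)) (hm _ jn).
Qed.


Theorem mainTheorem5 (R : realType) (dsp : measure_display) (Omega : measurableType dsp)
  (Pr : probability Omega R) (D : Omega -> pt R -> pt R -> R)
  (Dmetric : forall w, is_metric (D w))
  (Dtop : forall w, induces_euclidean_topology (D w))
  (Dlength : forall w, is_length_space (D w))
  (Duniq : {ae Pr, forall w, forall q : rat * rat, unique_geodesic_from0 (D w) (qpt R q)}) :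
  {ae Pr, forall w,
    forall (q : rat * rat) (Pq : R -> pt R) (Tq : R),
      is_geodesic (D w) Pq Tq (origin R) (qpt R q) ->
    forall (P' : R -> pt R) (T' : R), is_geodesic_from0 (D w) P' T' ->
    forall (u : pt R) (a b : R), 0 <= a <= Tq -> Pq a = u -> 0 <= b <= T' -> P' b = u ->
    exists s : R, [/\ 0 <= s /\ s <= Tq, s <= T', Pq s = u, P' s = u &
                      forall t, 0 <= t <= s -> Pq t = P' t]}.
Proof.
apply: filterS Duniq => w Hu q Pq Tq Gq P' T' [y G'] u a b /andP[a0 aT] Pa /andP[b0 bT'] Pb.
have Hm := Dmetric w.
move: (Hm) => [d0 [dE [dS dT]]].
have [Fq Lq] := @geo_facts _ _ Hm _ _ _ _ (Dlength w) Gq.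
have [F' L'] := @geo_facts _ _ Hm _ _ _ _ (Dlength w) G'.
have ab : a = b by rewrite -(Fq a) ?a0 ?aT // -(F' b) ?b0 ?bT' // Pa Pb.
subst b.
move: (Gq) => [[Tq0 [Pq0 [PqT Pqc]]] [Hminq Hparq]].
move: (G') => [[T'0 [P'0 [P'T P'c]]] [Hmin' Hpar']].
pose Q t := if t <= a then P' t else Pq t.
have QL : forall s t, 0 <= s -> s <= t -> t <= Tq -> D w (Q s) (Q t) <= t - s.
  move=> s t s0 st tTq; rewrite /Q.
  case: (lerP s a) => sa; case: (lerP t a) => ta.
  - by apply: L' => //; apply: le_trans bT'.
  - apply: le_trans (dT _ u _) _.
    have h1 := L' s a s0 sa bT'; rewrite Pb in h1.
    have h2 := Lq a t a0 (ltW ta) tTq; rewrite Pa in h2.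
    move: h1 h2; lra.
  - by move: sa st ta; lra.
  - by apply: Lq => //; apply: le_trans (ltW sa).
have QLs : forall s t, 0 <= s <= Tq -> 0 <= t <= Tq -> D w (Q t) (Q s) <= `|s - t|.
  move=> s t /andP[s0 sT] /andP[t0 tT].
  case: (lerP s t) => st.
    rewrite dS; apply: le_trans (QL s t s0 st tT) _.
    by [].
  apply: le_trans (QL t s t0 (ltW st) sT) _; by [].
have Q0 : Q 0 = origin R by rewrite /Q a0.
have Fqq : forall t, 0 <= t <= Tq -> D w (origin R) (Q t) = t.
  move=> t /andP[t0 tT]; rewrite /Q; case: (lerP t a) => ta.
    by apply: F'; rewrite t0 (le_trans ta bT').
  by apply: Fq; rewrite t0 tT.
have Qpar : forall t, 0 <= t <= Tq -> path_length (D w) Q 0 t = t%:E.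
  move=> t /andP[t0 tT]; apply/le_anti/andP; split.
    apply: part_ub => n tt h0 hn hm.
    have hin : forall i, (i <= n)%N -> 0 <= tt i <= Tq.
      move=> i ilen; rewrite -h0 (@mono_le _ _ _ hm _ _ (leq0n i) ilen) /=.
      by apply: le_trans tT; rewrite -hn; apply: (@mono_le _ _ _ hm _ _ ilen).
    apply: (@le_trans _ _ (\sum_(i < n) (tt i.+1 - tt i))).
      apply: ler_sum => i _.
      have /andP[hi0 hiT] := hin i (ltnW (ltn_ord i)).
      have /andP[hj0 hjT] := hin i.+1 (ltn_ord i).
      exact: QL (tt i) (tt i.+1) hi0 (hm i (ltn_ord i)) hjT.
    rewrite -(big_mkord xpredT (fun i => tt i.+1 - tt i)) telescope_sumr // hn h0.
    by rewrite subr0.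
  have := @part2 R (D w) Q 0 t t0; rewrite Q0 Fqq ?t0 ?tT //.
have GQ : is_geodesic (D w) Q Tq (origin R) (qpt R q).
  split; [split; [|split; [|split]]|split] => //.
  - rewrite /Q; case: (lerP Tq a) => Ta; last exact: PqT.
    have eTa : Tq = a by apply/le_anti; rewrite Ta aT.
    by rewrite -PqT eTa Pb -Pa.
  - move=> t ht e e0.
    have [r r0 Hr] := (Dtop w (Q t)).2 e e0.
    exists r => // s hs hst; apply: Hr.
    exact: le_lt_trans (QLs s t hs ht) hst.
  - move=> Q' S HQ'; rewrite Qpar ?Tq0 ?lexx // -(Hparq Tq) ?Tq0 ?lexx //.
    exact: Hminq.
have [_ Hun] := Hu q.
have [_ Heq] := Hun Q Tq Pq Tq GQ Gq.
exists a; split => //.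
move=> t /andP[t0 ta]; rewrite -Heq ?t0 ?(le_trans ta aT) //.
by rewrite /Q ta.
Qed.
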